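(* Suppose the kernel $k$ satisfies $\int_\mathcal{G}k(gx,x')\,d\lambda(g)=\int_\mathcal{G}k(x,gx')\,d\lambda(g)$ for all $x,x'\in\mathcal{X}$. Let $\overline{\mathcal{H}}=\{f\in\mathcal{H}:f\text{ is }\mathcal{G}\text{-invariant}\}$ and $\mathcal{H}_\perp=\{f\in\mathcal{H}:\mathcal{O}f=0\}$, where $\mathcal{O}f(x)=\int_\mathcal{G}f(gx)\,d\lambda(g)$. Then $\mathcal{O}$ maps $\mathcal{H}$ into $\mathcal{H}$, and: - $\mathcal{H}$ admits the orthogonal decomposition $\mathcal{H}=\overline{\mathcal{H}}\oplus\mathcal{H}_\perp$ (orthogonality with respect to $\langle\cdot,\cdot\rangle_\mathcal{H}$); - $\overline{\mathcal{H}}$ is an RKHS with kernel $\bar k(x,y)=\int_\mathcal{G}k(x,gy)\,d\lambda(g)$; - $\mathcal{H}_\perp$ is an RKHS with kernel $k^\perp(x,y)=k(x,y)-\bar k(x,y)$.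
   Context: $\mathcal{G}$ is a compact, second countable, Hausdorff topological group with Haar probability measure $\lambda$, acting measurably on a nonempty Polish space $\mathcal{X}$; $\mu$ is a $\mathcal{G}$-invariant Borel probability measure on $\mathcal{X}$ with $\mathrm{supp}\,\mu=\mathcal{X}$. $k:\mathcal{X}\times\mathcal{X}\to\mathbb{R}$ is a measurable symmetric positive definite kernel with RKHS $\mathcal{H}$ (inner product $\langle\cdot,\cdot\rangle_\mathcal{H}$), such that $k(\cdot,x)$ is continuous for all $x$ and $\sup_xk(x,x)<\infty$. $f$ is $\mathcal{G}$-invariant if $f(gx)=f(x)$ for all $g,x$. *)

(* Defs.v *)
From HB Require Import structures.
From mathcomp Require Import all_boot all_order all_algebra.
From mathcomp Require Import all_classical all_reals all_analysis.

Set Implicit Arguments.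
Unset Strict Implicit.
Unset Printing Implicit Defensive.

Import Order.TTheory GRing.Theory Num.Theory.
Import numFieldNormedType.Exports.

Local Open Scope classical_set_scope.
Local Open Scope ring_scope.

Definition borelT (T : ptopologicalType) := g_sigma_algebraType (@open T).

Definition topological_group (G : ptopologicalType)
  (mul : G -> G -> G) (inv : G -> G) (e : G) : Prop :=
  [/\ (forall a b c, mul a (mul b c) = mul (mul a b) c),
      (forall a, mul e a = a /\ mul a e = a),
      (forall a, mul (inv a) a = e /\ mul a (inv a) = e),
      continuous (fun p : G * G => mul p.1 p.2) &
      continuous inv ].

Definition haar_probability (R : realType) (G : ptopologicalType)
  (mul : G -> G -> G) (lam : probability (borelT G) R) : Prop :=
  forall (g : G) (A : set (borelT G)), measurable A ->
    lam ((mul g) @` A) = lam A.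

Definition polish (R : realType) (T : ptopologicalType) : Prop :=
  (exists d : T -> T -> R,
    [/\ (forall x y, 0 <= d x y),
        (forall x y, d x y = 0 <-> x = y),
        (forall x y, d x y = d y x),
        (forall x y z, d x z <= d x y + d y z) /\
        (forall U : set T, open U <->
           (forall x, U x -> exists2 r : R, 0 < r & [set y | d x y < r] `<=` U)) &
        (forall u : nat -> T,
           (forall eps : R, 0 < eps -> exists N, forall m n, (N <= m)%N -> (N <= n)%N ->
              d (u m) (u n) < eps) ->
           exists l : T, forall eps : R, 0 < eps -> exists N, forall n, (N <= n)%N ->
              d (u n) l < eps) ]) /\
  (exists2 D : set T, countable D & dense D).

Definition measurable_action (G X : ptopologicalType) (mul : G -> G -> G) (e : G)
  (act : G -> X -> X) : Prop :=
  [/\ (forall x, act e x = x),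
      (forall g h x, act (mul g h) x = act g (act h x)) &
      measurable_fun [set: (borelT G * borelT X)%type]
        (fun p : (borelT G * borelT X)%type => (act p.1 p.2 : borelT X)) ].

Definition msupport (R : realType) (X : ptopologicalType)
  (mu : probability (borelT X) R) : set X :=
  [set x | forall U : set X, open U -> U x -> (0 < mu U)%E].

Definition pd_kernel (R : realType) (X : Type) (k : X -> X -> R) : Prop :=
  (forall x y, k x y = k y x) /\
  (forall (n : nat) (xs : 'I_n -> X) (c : 'I_n -> R),
     0 <= \sum_(i < n) \sum_(j < n) c i * c j * k (xs i) (xs j)).

Definition is_rkhs (R : realType) (X : Type) (H : set (X -> R))
  (ip : (X -> R) -> (X -> R) -> R) (k : X -> X -> R) : Prop :=
  let nrm := fun f : X -> R => Num.sqrt (ip f f) in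
  [/\
      H (fun _ => 0) /\
      (forall f g, H f -> H g -> H (fun x => f x + g x)) /\
      (forall (a : R) f, H f -> H (fun x => a * f x)),
      (forall f g, H f -> H g -> ip f g = ip g f) /\
      (forall f g h, H f -> H g -> H h -> ip (fun x => f x + g x) h = ip f h + ip g h) /\
      (forall (a : R) f g, H f -> H g -> ip (fun x => a * f x) g = a * ip f g) /\
      (forall f, H f -> 0 <= ip f f) /\
      (forall f, H f -> ip f f = 0 -> f = (fun _ => 0)),
      (forall u : nat -> X -> R, (forall n, H (u n)) ->
         (forall eps : R, 0 < eps -> exists N, forall m n, (N <= m)%N -> (N <= n)%N ->
            nrm (fun x => u m x - u n x) < eps) ->
         exists2 f, H f & forall eps : R, 0 < eps -> exists N, forall n, (N <= n)%N ->
            nrm (fun x => u n x - f x) < eps),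
      (forall x, H (fun y => k y x)) &
      (forall f x, H f -> ip f (fun y => k y x) = f x) ].

Definition avg_op (R : realType) (G X : ptopologicalType)
  (lam : probability (borelT G) R) (act : G -> X -> X) (f : X -> R) : X -> R :=
  fun x => Rintegral lam [set: borelT G] (fun g : borelT G => f (act g x)).

Definition kbar (R : realType) (G X : ptopologicalType)
  (lam : probability (borelT G) R) (act : G -> X -> X) (k : X -> X -> R) :
  X -> X -> R :=
  fun x y => Rintegral lam [set: borelT G] (fun g : borelT G => k x (act g y)).

Definition G_invariant (G X : Type) (act : G -> X -> X) (R : Type) (f : X -> R) :=
  forall g x, f (act g x) = f x.

(* Main.v *)
Require Import Defs.
From HB Require Import structures.
From mathcomp Require Import all_boot all_order all_algebra.
From mathcomp Require Import all_classical all_reals all_analysis.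
From mathcomp Require Import ring lra measurable_realfun.
Set Implicit Arguments.
Unset Strict Implicit.
Unset Printing Implicit Defensive.
Import Order.TTheory GRing.Theory Num.Theory.
Import numFieldNormedType.Exports.
Local Open Scope classical_set_scope.
Local Open Scope ring_scope.
Lemma harmonic (R : realType) (d : R) : 0 < d -> exists N, forall n, (N <= n)%N -> n.+1%:R^-1 < d.
Proof.
move=> d0; exists (Num.Def.archi_bound d^-1) => n hn.
rewrite -[d]invrK ltf_pV2 ?posrE ?invr_gt0 ?ltr0Sn //.
apply: (lt_le_trans (archi_boundP _)); first by rewrite invr_ge0 ltW.
by rewrite ler_nat; apply: leq_trans hn _.
Qed.

Lemma zero_of_small (R : realType) (A : R) : (forall d, 0 < d -> `|A| < d + d) -> A = 0.
Proof.
move=> h; apply/eqP/negPn/negP => hA.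
have hA' : 0 < `|A| by rewrite normr_gt0.
have := h (`|A| / 2) (divr_gt0 hA' (ltr0Sn _ 1)).
by rewrite -splitr ltxx.
Qed.


Section Hilbert.
Set Default Proof Using "All".
Variables (R : realType) (X : Type) (H : set (X -> R))
  (ip : (X -> R) -> (X -> R) -> R).
Hypothesis H0 : H (fun _ => 0).
Hypothesis HD : forall f g, H f -> H g -> H (fun x => f x + g x).
Hypothesis HZ : forall (a : R) f, H f -> H (fun x => a * f x).
Hypothesis ipC : forall f g, H f -> H g -> ip f g = ip g f.
Hypothesis ipD : forall f g h, H f -> H g -> H h ->
  ip (fun x => f x + g x) h = ip f h + ip g h.
Hypothesis ipZ : forall (a : R) f g, H f -> H g ->
  ip (fun x => a * f x) g = a * ip f g.
Hypothesis ip_ge0 : forall f, H f -> 0 <= ip f f.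
Hypothesis ip_eq0 : forall f, H f -> ip f f = 0 -> f = (fun _ => 0).

Definition nrm (f : X -> R) := Num.sqrt (ip f f).

Lemma Hlc a b f g : H f -> H g -> H (fun x => a * f x + b * g x).
Proof. by move=> hf hg; exact: (HD (HZ a hf) (HZ b hg)). Qed.

Lemma Hsub f g : H f -> H g -> H (fun x => f x - g x).
Proof.
move=> hf hg; have -> : (fun x => f x - g x) = (fun x => 1 * f x + (-1) * g x).
  by apply/funext => x; rewrite mul1r mulN1r.
exact: Hlc.
Qed.

Lemma Hlc3 a b c f g h : H f -> H g -> H h ->
  H (fun x => a * f x + b * g x + c * h x).
Proof.
move=> hf hg hh; have := HD (Hlc a b hf hg) (HZ c hh); by [].
Qed.

Lemma ipL a b f g h : H f -> H g -> H h ->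
  ip (fun x => a * f x + b * g x) h = a * ip f h + b * ip g h.
Proof.
move=> hf hg hh; have := ipD (HZ a hf) (HZ b hg) hh => /= ->.
by rewrite !ipZ.
Qed.

Lemma ipR a b f g h : H f -> H g -> H h ->
  ip h (fun x => a * f x + b * g x) = a * ip h f + b * ip h g.
Proof.
move=> hf hg hh; rewrite ipC ?ipL //; last exact: Hlc.
by rewrite (ipC hf hh) (ipC hg hh).
Qed.

Lemma ip3 a b c f g h l : H f -> H g -> H h -> H l ->
  ip (fun x => a * f x + b * g x + c * h x) l
  = a * ip f l + b * ip g l + c * ip h l.
Proof.
move=> hf hg hh hl.
have := ipD (Hlc a b hf hg) (HZ c hh) hl => /= ->.
by rewrite ipL // ipZ.
Qed.

Lemma ip3r a b c f g h l : H f -> H g -> H h -> H l ->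
  ip l (fun x => a * f x + b * g x + c * h x)
  = a * ip l f + b * ip l g + c * ip l h.
Proof.
move=> hf hg hh hl; rewrite ipC ?ip3 //; last exact: Hlc3.
by rewrite (ipC hf hl) (ipC hg hl) (ipC hh hl).
Qed.

Lemma Q3 a b c f g h : H f -> H g -> H h ->
  ip (fun x => a * f x + b * g x + c * h x) (fun x => a * f x + b * g x + c * h x)
  = a ^+ 2 * ip f f + b ^+ 2 * ip g g + c ^+ 2 * ip h h
    + 2 * a * b * ip f g + 2 * a * c * ip f h + 2 * b * c * ip g h.
Proof.
move=> hf hg hh; rewrite ip3 ?ip3r //; last exact: Hlc3.
rewrite (ipC hg hf) (ipC hh hf) (ipC hh hg); ring.
Qed.

Lemma Q2 a b f g : H f -> H g ->
  ip (fun x => a * f x + b * g x) (fun x => a * f x + b * g x)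
  = a ^+ 2 * ip f f + b ^+ 2 * ip g g + 2 * a * b * ip f g.
Proof.
move=> hf hg; rewrite ipL ?ipR //; last exact: Hlc.
rewrite (ipC hg hf); ring.
Qed.

Lemma ip0l h : H h -> ip (fun _ => 0) h = 0.
Proof.
move=> hh; have -> : (fun _ : X => 0 : R) = (fun x => 0 * h x).
  by apply/funext => x; rewrite mul0r.
by rewrite ipZ // mul0r.
Qed.

Lemma ip0r h : H h -> ip h (fun _ => 0) = 0.
Proof. by move=> hh; rewrite ipC // ip0l. Qed.

Lemma ipB f g h : H f -> H g -> H h ->
  ip (fun x => f x - g x) h = ip f h - ip g h.
Proof.
move=> hf hg hh; have -> : (fun x => f x - g x) = (fun x => 1 * f x + (-1) * g x).
  by apply/funext => x; rewrite mul1r mulN1r.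
by rewrite ipL // mul1r mulN1r.
Qed.

Lemma ipBr f g h : H f -> H g -> H h ->
  ip h (fun x => f x - g x) = ip h f - ip h g.
Proof.
move=> hf hg hh; rewrite ipC ?ipB //; last exact: Hsub.
by rewrite (ipC hf hh) (ipC hg hh).
Qed.

Lemma nrm_ge0 f : 0 <= nrm f.
Proof. exact: sqrtr_ge0. Qed.

Lemma nrm_sq f : H f -> nrm f ^+ 2 = ip f f.
Proof. by move=> hf; rewrite /nrm sqr_sqrtr // ip_ge0. Qed.

Lemma CS f g : H f -> H g -> ip f g ^+ 2 <= ip f f * ip g g.
Proof.
move=> hf hg.
have [g0|gpos] := eqVneq (ip g g) 0.
  by rewrite g0 mulr0 (ip_eq0 hg g0) ip0r // expr0n.
have gp : 0 < ip g g by rewrite lt_neqAle eq_sym gpos ip_ge0.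
have := ip_ge0 (Hlc (ip g g) (- ip f g) hf hg).
rewrite Q2 // => h.
have : 0 <= ip g g * (ip f f * ip g g - ip f g ^+ 2) by
  rewrite (_ : _ * _ = (ip g g) ^+ 2 * ip f f + (- ip f g) ^+ 2 * ip g g +
     2 * ip g g * - ip f g * ip f g) //; ring.
rewrite pmulr_rge0 // subr_ge0 //.
Qed.

Lemma abs_ip f g : H f -> H g -> `|ip f g| <= nrm f * nrm g.
Proof.
move=> hf hg; rewrite /nrm -sqrtrM ?ip_ge0 // -sqrtr_sqr.
by apply: ler_wsqrtr; exact: CS.
Qed.

Lemma nrm_ltP f eps : 0 < eps -> (nrm f < eps) = (ip f f < eps ^+ 2).
Proof.
by move=> e0; rewrite -[RHS]ltr_sqrt ?exprn_gt0 // sqrtr_sqr gtr0_norm.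
Qed.

Hypothesis Hcompl : forall u : nat -> X -> R, (forall n, H (u n)) ->
   (forall eps : R, 0 < eps -> exists N, forall m n, (N <= m)%N -> (N <= n)%N ->
      nrm (fun x => u m x - u n x) < eps) ->
   exists2 f, H f & forall eps : R, 0 < eps -> exists N, forall n, (N <= n)%N ->
      nrm (fun x => u n x - f x) < eps.

Definition subspace (S : set (X -> R)) := [/\ S `<=` H, S (fun _ => 0) &
  forall a b f g, S f -> S g -> S (fun x => a * f x + b * g x)].

Definition closedH (S : set (X -> R)) := forall (u : nat -> X -> R) f,
  (forall n, S (u n)) -> H f ->
  (forall eps, 0 < eps -> exists N, forall n, (N <= n)%N ->
     nrm (fun x => u n x - f x) < eps) -> S f.

Lemma projection S : subspace S -> closedH S -> forall f, H f ->
  exists2 p, S p & forall s, S s -> ip (fun x => f x - p x) s = 0.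
Proof.
move=> [SH S0 Slc] Scl f hf.
pose Qd s := ip (fun x => f x - s x) (fun x => f x - s x).
pose D := [set r | exists2 s, S s & r = Qd s].
have hD : has_inf D.
  split; first by exists (Qd (fun _ => 0)); exists (fun _ => 0).
  by exists 0 => r [s Ss ->]; apply: ip_ge0; apply: Hsub => //; exact: SH.
set d := inf D.
have dle s : S s -> d <= Qd s.
  by move=> Ss; apply: (ge_inf hD.2); exists s.
have hs : forall n : nat, exists s, S s /\ Qd s < d + n.+1%:R^-1.
  move=> n; have hn0 : 0 < n.+1%:R^-1 :> R by rewrite invr_gt0.
  have [r [s Ss ->] hr] := inf_adherent hn0 hD.
  by exists s.
have [s hs'] := choice hs.
have sH n : H (s n) by apply: SH; exact: (hs' n).1.
have para n m : ip (fun x => s n x - s m x) (fun x => s n x - s m x)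
    < 2 * n.+1%:R^-1 + 2 * m.+1%:R^-1.
  have mid : S (fun x => 2^-1 * s n x + 2^-1 * s m x).
    by apply: Slc; exact: (hs' _).1.
  have h1 := dle _ mid.
  have [_ h2] := hs' n; have [_ h3] := hs' m.
  move: h1 h2 h3; rewrite /Qd.
  have -> : (fun x => s n x - s m x) =
    (fun x => 0 * f x + 1 * s n x + (-1) * s m x) by apply/funext => x; ring.
  have -> : (fun x => f x - s n x) =
    (fun x => 1 * f x + (-1) * s n x + 0 * s m x) by apply/funext => x; ring.
  have -> : (fun x => f x - s m x) =
    (fun x => 1 * f x + 0 * s n x + (-1) * s m x) by apply/funext => x; ring.
  have -> : (fun x => f x - (2^-1 * s n x + 2^-1 * s m x)) =
    (fun x => 1 * f x + (- 2^-1) * s n x + (- 2^-1) * s m x).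
    by apply/funext => x; ring.
  rewrite !Q3 // => h1 h2 h3.
  move: h1 h2 h3.
  set ff := ip f f; set nn := ip (s n) (s n); set mm := ip (s m) (s m).
  set fn := ip f (s n); set fm := ip f (s m); set nm := ip (s n) (s m).
  set en := n.+1%:R^-1; set em := m.+1%:R^-1.
  move=> h1 h2 h3.
  have E : 0 ^+ 2 * ff + 1 ^+ 2 * nn + (-1) ^+ 2 * mm + 2 * 0 * 1 * fn + 2 * 0 * -1 * fm + 2 * 1 * -1 * nm = 2 * (1 ^+ 2 * ff + (-1) ^+ 2 * nn + 0 ^+ 2 * mm + 2 * 1 * -1 * fn + 2 * 1 * 0 * fm + 2 * -1 * 0 * nm) + 2 * (1 ^+ 2 * ff + 0 ^+ 2 * nn + (-1) ^+ 2 * mm + 2 * 1 * 0 * fn + 2 * 1 * -1 * fm + 2 * 0 * -1 * nm) - 4 * (1 ^+ 2 * ff + (- 2^-1) ^+ 2 * nn + (- 2^-1) ^+ 2 * mm + 2 * 1 * (- 2^-1) * fn + 2 * 1 * (- 2^-1) * fm + 2 * (- 2^-1) * (- 2^-1) * nm).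
    by field.
  rewrite E.
  lra.
have cau : forall eps : R, 0 < eps -> exists N, forall m n, (N <= m)%N -> (N <= n)%N ->
    nrm (fun x => s m x - s n x) < eps.
  move=> eps e0; have [N hN] := harmonic (d := eps ^+ 2 / 4)
    (divr_gt0 (exprn_gt0 _ e0) (ltr0Sn _ 3)).
  exists N => m n hm hn; rewrite nrm_ltP //.
  apply: (lt_le_trans (para m n)).
  have := hN _ hm; have := hN _ hn; move=> h1 h2.
  move: h1 h2; set en := n.+1%:R^-1; set em := m.+1%:R^-1; move=> h1 h2; lra.
have [p hp pcv] := Hcompl sH cau.
have Sp : S p := Scl s p (fun n => (hs' n).1) hp pcv.
exists p => // t St.
have tH := SH _ St.
apply: zero_of_small => del del0.
set A := ip (fun x => f x - p x) t.
set c := ip t t + 1.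
have c0 : 0 < c by have := ip_ge0 tH; rewrite /c; lra.
have [N1 hN1] := harmonic (d := del ^+ 2 / c) (divr_gt0 (exprn_gt0 _ del0) c0).
have nt0 : 0 < nrm t + 1 by have := nrm_ge0 t; lra.
have [N2 hN2] := pcv (del / (nrm t + 1)) (divr_gt0 del0 nt0).
set n := maxn N1 N2.
have hn1 := hN1 n (leq_maxl _ _).
have hn2 := hN2 n (leq_maxr _ _).
set a := ip (fun x => f x - s n x) t.
have key : forall tau, 2 * tau * a - tau ^+ 2 * ip t t < n.+1%:R^-1.
  move=> tau.
  have Sst : S (fun x => 1 * s n x + tau * t x) by apply: Slc => //; exact: (hs' n).1.
  have h1 := dle _ Sst; have [_ h2] := hs' n.
  move: h1 h2; rewrite /Qd /a.
  have -> : (fun x => f x - (1 * s n x + tau * t x)) =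
    (fun x => 1 * f x + (-1) * s n x + (- tau) * t x) by apply/funext => x; ring.
  have -> : (fun x => f x - s n x) =
    (fun x => 1 * f x + (-1) * s n x + 0 * t x) by apply/funext => x; ring.
  rewrite !Q3 // ip3 // => h1 h2.
  move: h1 h2; set en := n.+1%:R^-1.
  set ff := ip f f; set nn := ip (s n) (s n); set tt := ip t t.
  set fn := ip f (s n); set ft := ip f t; set nt := ip (s n) t.
  set tn := ip t (s n).
  move=> h1 h2.
  have E : 1 ^+ 2 * ff + (-1) ^+ 2 * nn + (- tau) ^+ 2 * tt + 2 * 1 * -1 * fn + 2 * 1 * - tau * ft + 2 * -1 * - tau * nt = (1 ^+ 2 * ff + (-1) ^+ 2 * nn + 0 ^+ 2 * tt + 2 * 1 * -1 * fn + 2 * 1 * 0 * ft + 2 * -1 * 0 * nt) - (2 * tau * (1 * ft + -1 * nt + 0 * tt) - tau ^+ 2 * tt) by ring.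
  lra.
have an : a ^+ 2 < n.+1%:R^-1 * c.
  have := key (a / c).
  have -> : 2 * (a / c) * a - (a / c) ^+ 2 * ip t t = a ^+ 2 / c + a ^+ 2 / c ^+ 2.
    have cn0 : c != 0 by rewrite gt_eqF.
    rewrite (_ : ip t t = c - 1); last by rewrite /c; ring.
    by field.
  move=> h.
  have : a ^+ 2 / c < n.+1%:R^-1.
    apply: le_lt_trans h; rewrite lerDl; apply: divr_ge0; exact: sqr_ge0.
  by rewrite ltr_pdivrMr.
have an2 : a ^+ 2 < del ^+ 2.
  apply: (lt_trans an); by rewrite -ltr_pdivlMr.
have aabs : `|a| < del.
  by rewrite -(ltr_pXn2r (_ : (0 < 2)%N)) ?nnegrE ?normr_ge0 ?ltW // real_normK ?num_real.
set w := ip (fun x => s n x - p x) t.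
have wabs : `|w| < del.
  apply: (le_lt_trans (abs_ip (Hsub (sH n) hp) tH)).
  apply: (le_lt_trans (y := nrm (fun x => s n x - p x) * (nrm t + 1))).
    by rewrite ler_wpM2l ?nrm_ge0 // lerDl.
  by rewrite -ltr_pdivlMr.
have -> : A = a + w by rewrite /A /a /w !ipB //; ring.
by apply: (le_lt_trans (ler_normD _ _)); rewrite ltrD.
Qed.

Lemma riesz (phi : (X -> R) -> R) (C : R) :
  (forall a b f g, H f -> H g ->
     phi (fun x => a * f x + b * g x) = a * phi f + b * phi g) ->
  (forall f, H f -> `|phi f| <= C * nrm f) ->
  exists2 r, H r & forall h, H h -> ip h r = phi h.
Proof.
move=> phiL phiB.
have phiB' f g : H f -> H g -> phi (fun x => f x - g x) = phi f - phi g.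
  move=> hf hg; have -> : (fun x => f x - g x) = (fun x => 1 * f x + (-1) * g x).
    by apply/funext => x; ring.
  by rewrite phiL //; ring.
have phi0 : phi (fun _ => 0) = 0.
  have := phiB' _ _ H0 H0.
  have -> : (fun x : X => (0:R) - 0) = (fun _ => 0) by apply/funext => x; rewrite subrr.
  by rewrite subrr.
pose S := [set h | H h /\ phi h = 0].
have subS : subspace S.
  split; first by move=> h [].
  - by split.
  - move=> a b f g [hf pf] [hg pg]; split; first exact: Hlc.
    by rewrite phiL // pf pg !mulr0 addr0.
have clS : closedH S.
  move=> u f uS hf cv; split => //.
  apply: zero_of_small => del del0.
  have C0 : 0 < `|C| + 1 by have := normr_ge0 C; lra.
  have [N hN] := cv (del / (`|C| + 1)) (divr_gt0 del0 C0).
  have [hu pu] := uS N.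
  have hN' := hN N (leqnn N).
  have E : phi f = - phi (fun x => u N x - f x) by rewrite phiB' // pu; ring.
  rewrite E normrN.
  apply: (le_lt_trans (phiB _ (Hsub hu hf))).
  apply: (le_lt_trans (y := (`|C| + 1) * nrm (fun x => u N x - f x))).
    apply: ler_wpM2r; first exact: nrm_ge0.
    by apply: (le_trans (ler_norm C)); lra.
  rewrite mulrC -ltr_pdivlMr //.
  have := del0; move: hN'; set q := del / _ => hq _.
  apply: (lt_le_trans hq); rewrite /q; apply: ler_wpM2r.
    by rewrite invr_ge0 ltW.
  by rewrite lerDl ltW.
case: (pselect (forall h, H h -> phi h = 0)) => [allz|].
  by exists (fun _ => 0) => // h hh; rewrite ip0r // allz.
move=> /existsNP [h0] /not_implyP [h0H ph0].
have [p [pH pp] orth] := projection subS clS h0H.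
have zH : H (fun x => h0 x - p x) := Hsub h0H pH.
have phz : phi (fun x => h0 x - p x) = phi h0 by rewrite phiB' // pp subr0.
have phz0 : phi (fun x => h0 x - p x) != 0 by rewrite phz; apply/eqP.
have zz : ip (fun x => h0 x - p x) (fun x => h0 x - p x) != 0.
  apply/eqP => z0; move: phz0; rewrite (ip_eq0 zH z0) phi0 eqxx //.
set z := (fun x => h0 x - p x) in zH phz phz0 zz orth *.
exists (fun x => (phi z / ip z z) * z x); first exact: HZ.
move=> h hh.
rewrite ipC ?ipZ //; last exact: HZ.
have w_in : S (fun x => 1 * h x + (- (phi h / phi z)) * z x).
  split; first exact: Hlc.
  by rewrite phiL // mul1r; field.
have := orth _ w_in; rewrite ipR // mul1r => E.
have -> : ip z h = phi h / phi z * ip z z.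
  by apply/eqP; rewrite -subr_eq0; apply/eqP; rewrite -E; ring.
by field; apply/andP.
Qed.

End Hilbert.
Lemma cont_meas (T U : ptopologicalType) (f : T -> U) : continuous f ->
  measurable_fun [set: borelT T] (f : borelT T -> borelT U).
Proof.
move=> cf; apply: (@measurability _ _ (borelT T) (borelT U) _ _ (@open U)) => //.

move=> _ [A oA <-]; apply: sub_sigma_algebra; rewrite setTI.
by apply: open_comp => // x _; exact: cf.
Qed.

Lemma cont_mul_l (G : ptopologicalType) (mul : G -> G -> G) (a : G) :
  continuous (fun p : G * G => mul p.1 p.2) -> continuous (mul a).
Proof.
move=> cm x.
have -> : mul a = (fun p : G * G => mul p.1 p.2) \o (fun g => (a, g)) by [].
apply: continuous_comp; last exact: cm.
by apply: cvg_pair; [exact: cvg_cst | exact: cvg_id].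
Qed.

Section LI.
Variables (R : realType) (G : ptopologicalType) (mul : G -> G -> G)
  (inv : G -> G) (e : G) (lam : probability (borelT G) R).
Hypothesis tg : topological_group mul inv e.
Hypothesis hp : haar_probability mul lam.

Lemma haar_int (F : borelT G -> R) a : measurable_fun setT F ->
  (exists C, forall g, `|F g| <= C) ->
  (\int[lam]_g (F (mul a g))%:E = \int[lam]_g (F g)%:E)%E.
Proof.
move: tg; rewrite /topological_group => -[assoc unit invl cm ci] mF [C hC].
have ma : measurable_fun [set: borelT G] (mul a : borelT G -> borelT G).
  by apply: cont_meas; exact: cont_mul_l.
have bF : forall (h : borelT G -> R), (forall g, `|h g| <= C) -> measurable_fun setT h ->
   lam.-integrable setT (EFin \o h).
  move=> h hh mh; apply: measurable_bounded_integrable => //.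
    by apply: (le_lt_trans (probability_le1 _ measurableT)); rewrite ltry.
  exists C; split; first exact: num_real.
  by move=> M CM x _; apply: le_trans (hh x) (ltW CM).
have := @integral_pushforward _ _ (borelT G) (borelT G) R (mul a) ma lam setT (EFin \o F).
move=> /(_ _ _ measurableT).
rewrite preimage_setT.
move=> <- //.
- apply: eq_measure_integral => A mA _.
  rewrite /pushforward.
  have mB : measurable ((mul a @^-1` A) : set (borelT G)).
    by rewrite -[X in measurable X]setTI; exact: ma.
  have E := hp a mB.
  have E2 : mul a @` (mul a @^-1` A) = A.
    apply/seteqP; split => z.
      by case=> y hy <-.
    by move=> Az; exists (mul (inv a) z);
      rewrite /preimage /= assoc (invl a).2 (unit z).1.
  rewrite E2 in E.
  first [exact: E | exact: esym E].
- exact/measurable_EFinP.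
- by apply: bF => [g|]; [exact: hC | exact: (measurableT_comp mF ma)].
Qed.

Lemma inv_uniq a b : mul a b = e -> b = inv a.
Proof.
move: tg; rewrite /topological_group => -[assoc unit invl _ _] h.
by rewrite -(unit b).1 -(invl a).1 -assoc h (unit _).2.
Qed.

Lemma inv_mul a b : inv (mul a b) = mul (inv b) (inv a).
Proof.
move: tg; rewrite /topological_group => -[assoc unit invl _ _].
apply/esym/inv_uniq.
by rewrite -assoc (assoc b) (invl b).2 (unit _).1 (invl a).2.
Qed.

Lemma inv_inv a : inv (inv a) = a.
Proof.
move: tg; rewrite /topological_group => -[assoc unit invl _ _].
by apply/esym/inv_uniq; exact: (invl a).1.
Qed.

Variables (X : ptopologicalType) (act : G -> X -> X).
Hypothesis mact : measurable_action mul e act.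

Lemma mact_y y : measurable_fun [set: borelT G] (fun g => (act g y : borelT X)).
Proof.
move: mact; rewrite /measurable_action => -[_ _ m].
exact: (@measurable_fun_pair1 _ _ _ (borelT G) (borelT X) (borelT X) (fun p : borelT G * borelT X => (act p.1 p.2 : borelT X)) (y : borelT X) m).
Qed.

Lemma haar_inv (Phi : borelT X -> R) y : measurable_fun setT Phi ->
  (exists C, forall z, `|Phi z| <= C) ->
  (\int[lam]_g (Phi (act (inv g) y))%:E = \int[lam]_g (Phi (act g y))%:E)%E.
Proof.
move=> mPhi [C hC].
have tg' := tg.
move: tg'; rewrite /topological_group => -[assoc unit invl cm ci].
move: mact; rewrite /measurable_action => -[act1 actM mA].
have minv : measurable_fun [set: borelT G] (inv : borelT G -> borelT G).
  exact: cont_meas.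
pose f := fun p : borelT G * borelT G => (Phi (act (inv p.2) (act p.1 y)))%:E.
have mf : measurable_fun setT f.
  apply/measurable_EFinP.
  apply: (measurableT_comp mPhi).
  have m1 : measurable_fun [set: borelT G * borelT G]
      (fun p : borelT G * borelT G => ((inv p.2 : borelT G), (act p.1 y : borelT X))).
    apply: measurable_fun_pair.
      exact: (measurableT_comp minv measurable_snd).
    exact: (measurableT_comp (mact_y y) measurable_fst).
  exact: (measurableT_comp mA m1).
have imf : (lam \x lam)%E.-integrable setT f.
  apply: measurable_bounded_integrable => //.
    by apply: (le_lt_trans (probability_le1 _ measurableT)); rewrite ltry.
    by apply/measurable_EFinP.
  exists C; split; first exact: num_real.
  by move=> M CM x _; apply: le_trans (hC _) (ltW CM).
have FU := Fubini imf.
have mF1 : measurable_fun [set: borelT G] (fun h : borelT G => Phi (act (inv h) y)).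
  exact: (measurableT_comp mPhi (measurableT_comp (mact_y y) minv)).
have mF2 : measurable_fun [set: borelT G] (fun h : borelT G => Phi (act h y)).
  exact: (measurableT_comp mPhi (mact_y y)).
have inner1 g : (\int[lam]_g' f (g, g') = \int[lam]_g (Phi (act (inv g) y))%:E)%E.
  transitivity (\int[lam]_g' (Phi (act (inv (mul (inv g) g')) y))%:E)%E.
    by apply: eq_integral => g' _; rewrite /f /= inv_mul inv_inv -actM.
  apply: (haar_int (F := fun h => Phi (act (inv h) y))) => //.
  by exists C.
have inner2 g' : (\int[lam]_g f (g, g') = \int[lam]_g (Phi (act g y))%:E)%E.
  transitivity (\int[lam]_g (Phi (act (mul (inv g') g) y))%:E)%E.
    by apply: eq_integral => g _; rewrite /f /= actM.
  apply: (haar_int (F := fun h => Phi (act h y))) => //.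
  by exists C.
have P1 : lam [set: borelT G] = 1%E := probability_setT lam.
move: FU.
rewrite (eq_integral (fun=> \int[lam]_g (Phi (act (inv g) y))%:E)%E); last first.
  by move=> g _; exact: inner1.
rewrite [X in _ = X](eq_integral (fun=> \int[lam]_g (Phi (act g y))%:E)%E); last first.
  by move=> g _; exact: inner2.
rewrite !integral_cst //.
have -> : forall c : \bar R, (c * lam [set: borelT G] = c)%E.
  by move=> c; rewrite -[RHS]mule1; congr (_ * _)%E; exact: probability_setT.
have -> : forall c : \bar R, (c * lam [set: borelT G] = c)%E.
  by move=> c; rewrite -[RHS]mule1; congr (_ * _)%E; exact: probability_setT.
by [].
Qed.

Lemma haar_right (Phi : borelT X -> R) y h : measurable_fun setT Phi ->
  (exists C, forall z, `|Phi z| <= C) ->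
  Rintegral lam setT (fun g => Phi (act g (act h y))) =
  Rintegral lam setT (fun g => Phi (act g y)).
Proof.
move=> mPhi bPhi.
move: mact; rewrite /measurable_action => -[act1 actM mA].
have tg' := tg.
move: tg'; rewrite /topological_group => -[assoc unit invl cm ci].
have minv : measurable_fun [set: borelT G] (inv : borelT G -> borelT G).
  exact: cont_meas.
rewrite /Rintegral; congr fine.
rewrite -(haar_inv (act h y)) // -(haar_inv y) //.
transitivity (\int[lam]_g (Phi (act (inv (mul (inv h) g)) y))%:E)%E.
  by apply: eq_integral => g _; rewrite inv_mul inv_inv -actM.
apply: (haar_int (F := fun k => Phi (act (inv k) y))).
  exact: (measurableT_comp mPhi (measurableT_comp (mact_y y) minv)).
by case: bPhi => C hC; exists C => g; exact: hC.
Qed.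
End LI.

Unset Implicit Arguments.
Set Strict Implicit.

Theorem theorem5p14 (R : realType) (G X : ptopologicalType)
  (mul : G -> G -> G) (inv : G -> G) (e : G)
  (lam : probability (borelT G) R) (act : G -> X -> X)
  (mu : probability (borelT X) R) (k : X -> X -> R)
  (H : set (X -> R)) (ip : (X -> R) -> (X -> R) -> R) :
  topological_group mul inv e ->
  compact [set: G] -> @second_countable G -> hausdorff_space G ->
  haar_probability mul lam ->
  polish R X ->
  measurable_action mul e act ->
  (forall (g : G) (A : set (borelT X)), measurable A ->
     mu (act g @^-1` A) = mu A) ->
  msupport mu = [set: X] ->
  pd_kernel k ->
  measurable_fun [set: (borelT X * borelT X)%type]
    (fun p : (borelT X * borelT X)%type => k p.1 p.2) ->
  (forall x : X, continuous (fun y : X => k y x)) ->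
  (exists M : R, forall x, k x x <= M) ->
  is_rkhs H ip k ->
  (forall x x' : X,
     Rintegral lam [set: borelT G] (fun g : borelT G => k (act g x) x') =
     Rintegral lam [set: borelT G] (fun g : borelT G => k x (act g x'))) ->
  let O := avg_op lam act in
  let Hbar := [set f | H f /\ G_invariant act f] in
  let Hperp := [set f | H f /\ O f = (fun _ => 0)] in
  [/\ (forall f, H f -> H (O f)),
      (forall f, H f -> exists f1 f2,
          [/\ Hbar f1, Hperp f2 & f = (fun x => f1 x + f2 x)]) /\
      (forall f1 f2, Hbar f1 -> Hperp f2 -> ip f1 f2 = 0),
      is_rkhs Hbar ip (kbar lam act k) &
      is_rkhs Hperp ip (fun x y => k x y - kbar lam act k x y)].
Proof.
move=> tg cG scG hG hp pol mact muinv supp pdk mk kcont [M hM] rk hsym O Hbar Hperp.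
have rk' := rk.
move: rk'; rewrite /is_rkhs => -[[H0 [HD HZ]] [ipC [ipD [ipZ [ip_ge0 ip_eq0]]]] Hc kH krep].
have ksym : forall x y, k x y = k y x by case: pdk.
have Hlc' := Hlc H0 HD HZ ipC ipD ipZ ip_ge0 ip_eq0.
have Hsub' := Hsub H0 HD HZ ipC ipD ipZ ip_ge0 ip_eq0.
have ipL' := ipL H0 HD HZ ipC ipD ipZ ip_ge0 ip_eq0.
have ipB' := ipB H0 HD HZ ipC ipD ipZ ip_ge0 ip_eq0.
have ip0l' := ip0l H0 HD HZ ipC ipD ipZ ip_ge0 ip_eq0.
have ipBr' := ipBr H0 HD HZ ipC ipD ipZ ip_ge0 ip_eq0.
have abs_ip' := abs_ip H0 HD HZ ipC ipD ipZ ip_ge0 ip_eq0.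
have nrm_ge0' := nrm_ge0 H0 HD HZ ipC ipD ipZ ip_ge0 ip_eq0.
have proj := projection H0 HD HZ ipC ipD ipZ ip_ge0 ip_eq0 Hc.
have rsz := riesz H0 HD HZ ipC ipD ipZ ip_ge0 ip_eq0 Hc.
set sM := Num.sqrt M.
have sM0 : 0 <= sM := sqrtr_ge0 M.
have kxx x : ip (fun y => k y x) (fun y => k y x) = k x x := krep _ x (kH x).
have ptw : forall f y, H f -> `|f y| <= nrm ip f * sM.
  move=> f y hf; rewrite -(krep f y hf).
  apply: (le_trans (abs_ip' _ _ hf (kH y))).
  apply: ler_wpM2l; first exact: nrm_ge0'.
  rewrite /nrm kxx; exact: ler_wsqrtr.
have ptcv : forall (u : nat -> X -> R) f, (forall n, H (u n)) -> H f ->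
   (forall eps : R, 0 < eps -> exists N, forall n, (N <= n)%N ->
      nrm ip (fun x => u n x - f x) < eps) ->
   forall y, u ^~ y @ \oo --> f y.
  move=> u f hu hf cv y; apply/cvgrPdist_lt => eps e0.
  have s0 : 0 < sM + 1 by lra.
  have [N hN] := cv (eps / (sM + 1)) (divr_gt0 e0 s0).
  exists N => // n /= hn.
  have h1 := ptw _ y (Hsub' _ _ (hu n) hf).
  rewrite distrC.
  apply: (le_lt_trans h1).
  apply: (le_lt_trans (y := nrm ip (fun x => u n x - f x) * (sM + 1))).
    by rewrite ler_wpM2l ?nrm_ge0' // lerDl.
  by rewrite -ltr_pdivlMr //; exact: hN.
have mH : forall f, H f -> measurable_fun [set: borelT X] (f : borelT X -> R).
  pose S := [set f : X -> R | H f /\ measurable_fun [set: borelT X] (f : borelT X -> R)].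
  have subS : subspace H S.
    split; first by move=> f [].
    - by split => //; exact: measurable_cst.
    - move=> a b f g [hf mf] [hg mg]; split; first exact: Hlc'.
      by apply: measurable_funD; apply: measurable_funM => //; exact: measurable_cst.
  have clS : closedH H ip S.
    move=> u f uS hf cv; split => //.
    apply: (@measurable_fun_cvg _ (borelT X) R [set: borelT X] u (f : borelT X -> R)).
      by move=> n; exact: (uS n).2.
    by move=> x _; exact: (ptcv u f (fun n => (uS n).1) hf cv x).
  have kS x : S (fun y => k y x).
    split; first exact: kH.
    exact: (@measurable_fun_pair1 _ _ _ (borelT X) (borelT X) _
      (fun p : borelT X * borelT X => k p.1 p.2) (x : borelT X) mk).
  move=> f hf; have [p [hpH mp] orth] := proj S subS clS f hf.
  suff -> : f = p by [].
  apply/funext => y; apply/eqP; rewrite -subr_eq0; apply/eqP.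
  by rewrite -(krep _ y (Hsub' _ _ hf hpH)); exact: orth.
have probT : forall r : R, r * fine (lam [set: borelT G]) = r.
  move=> r; rewrite -[RHS]mulr1; congr (_ * _).
  by transitivity (fine (1%E : \bar R)) => //; congr fine; exact: probability_setT.
have intg : forall h y, H h -> lam.-integrable [set: borelT G] (EFin \o (fun g => h (act g y))).
  move=> h y hh; apply: measurable_bounded_integrable => //.
  - by apply: (le_lt_trans (probability_le1 _ measurableT)); rewrite ltry.
  - exact: (measurableT_comp (mH h hh) (mact_y tg hp mact y)).
  - exists (nrm ip h * sM); split; first exact: num_real.
    by move=> B hB g _; apply: le_trans (ptw h _ hh) (ltW hB).
have phiL : forall y a b f g, H f -> H g ->
    O (fun x => a * f x + b * g x) y = a * O f y + b * O g y.
  move=> y a b f g hf hg; rewrite /O /avg_op.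
  rewrite (RintegralD measurableT (intg _ y (HZ a _ hf)) (intg _ y (HZ b _ hg))).
  by rewrite (RintegralZl a measurableT (intg _ y hf)) (RintegralZl b measurableT (intg _ y hg)).
have phiB : forall y f, H f -> `|O f y| <= sM * nrm ip f.
  move=> y f hf; rewrite /O /avg_op.
  apply: (le_trans (le_normr_Rintegral measurableT (intg _ y hf))).
  apply: (le_trans (y := Rintegral lam [set: borelT G] (fun _ => nrm ip f * sM))).
    apply: le_Rintegral => //.
    - exact: integrable_norm (intg _ y hf).
    - apply: measurable_bounded_integrable => //.
        by apply: (le_lt_trans (probability_le1 _ measurableT)); rewrite ltry.
      exists (nrm ip f * sM); split; first exact: num_real.
      move=> B hB g _; apply: le_trans (ltW hB).
      by rewrite ger0_norm // mulr_ge0 // nrm_ge0'.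
    - by move=> g _; exact: ptw.
  by rewrite Rintegral_cst // probT mulrC.
have kb : forall y, H (fun z => kbar lam act k z y) /\
    forall h, H h -> ip h (fun z => kbar lam act k z y) = O h y.
  move=> y; have [r hr rrep] := rsz (fun h => O h y) sM (phiL y) (phiB y).
  suff -> : (fun z => kbar lam act k z y) = r by [].
  apply/funext => z; rewrite -(krep r z hr) (ipC _ _ hr (kH z)) rrep ?kH //.
  rewrite /O /avg_op /kbar; apply: eq_Rintegral => g _; exact: ksym.
have kbsym x y : kbar lam act k x y = kbar lam act k y x.
  rewrite /kbar -(hsym x y); apply: eq_Rintegral => g _; exact: ksym.
have kbinv h y x : kbar lam act k (act h y) x = kbar lam act k y x.
  rewrite kbsym (kbsym y).
  apply: (haar_right tg hp mact (Phi := fun z => k x z)).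
    exact: (@measurable_fun_pair2 _ _ _ (borelT X) (borelT X) _
      (fun p : borelT X * borelT X => k p.1 p.2) (x : borelT X) mk).
  exists (nrm ip (fun z => k z x) * sM) => z.
  by rewrite ksym; exact: (ptw _ z (kH x)).
have kbH y : Hbar (fun z => kbar lam act k z y).
  by split; [exact: (kb y).1 | move=> g z; exact: kbinv].
have O_inv p : Hbar p -> forall z, O p z = p z.
  move=> [hpH pI] z; rewrite /O /avg_op.
  transitivity (Rintegral lam [set: borelT G] (fun _ => p z)).
    by apply: eq_Rintegral => g _; exact: pI.
  by rewrite Rintegral_cst // probT.
have subB : subspace H Hbar.
  split; first by move=> f [].
  - by split.
  - move=> a b f g [hf If] [hg Ig]; split; first exact: Hlc'.
    by move=> g' x /=; rewrite (If g' x) (Ig g' x).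
have clB : closedH H ip Hbar.
  move=> u f uB hf cv; split => // g x.
  have c1 := ptcv u f (fun n => (uB n).1) hf cv (act g x).
  have c2 := ptcv u f (fun n => (uB n).1) hf cv x.
  have E : (u ^~ (act g x)) = (u ^~ x) by apply/funext => n; exact: (uB n).2.
  rewrite E in c1.
  by rewrite -(cvg_lim (@Rhausdorff R) c1) (cvg_lim (@Rhausdorff R) c2).
have Oproj : forall f, H f -> Hbar (O f) /\
    forall s, Hbar s -> ip (fun x => f x - O f x) s = 0.
  move=> f hf; have [p pB orth] := proj Hbar subB clB f hf.
  suff -> : O f = p by [].
  apply/funext => y.
  rewrite -(kb y).2 // -(O_inv p pB y) -(kb y).2; last exact: pB.1.
  apply/eqP; rewrite -subr_eq0 -ipB' //; first (apply/eqP; exact: orth (kbH y)).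
  - exact: pB.1.
  - exact: (kb y).1.
have OH : forall h y, H h -> O h y = ip h (fun z => kbar lam act k z y).
  by move=> h y hh; rewrite (kb y).2.
split.
- by move=> f hf; exact: (Oproj f hf).1.1.
- split.
  + move=> f hf; exists (O f), (fun x => f x - O f x).
    have [OB orth] := Oproj f hf.
    have h2 : H (fun x => f x - O f x) := Hsub' _ _ hf OB.1.
    split => //.
      split => //.
      apply/funext => y; rewrite OH //.
      exact: orth (kbH y).
    by apply/funext => x; rewrite addrC subrK.
  + move=> f1 f2 B1 [h2 O2].
    have [_ orth] := Oproj f2 h2.
    have := orth f1 B1.
    rewrite (_ : (fun x => f2 x - O f2 x) = f2); last first.
      by apply/funext => x; rewrite O2 subr0.
    by rewrite (ipC _ _ B1.1 h2).
- rewrite /is_rkhs; split.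
  + split; first by split.
    split.
    * move=> f g [hf If] [hg Ig]; split; first exact: HD.
      by move=> g' x; rewrite /= (If g' x) (Ig g' x).
    * move=> a f [hf If]; split; first exact: HZ.
      by move=> g' x; rewrite /= (If g' x).
  + split; first by move=> f g [hf _] [hg _]; exact: ipC.
    split; first by move=> f g h [hf _] [hg _] [hh _]; exact: ipD.
    split; first by move=> a f g [hf _] [hg _]; exact: ipZ.
    split; first by move=> f [hf _]; exact: ip_ge0.
    by move=> f [hf _]; exact: ip_eq0.
  + move=> u uB cau.
    have [f hf cv] := Hc u (fun n => (uB n).1) cau.
    by exists f => //; exact: clB u f uB hf cv.
  + by move=> x; exact: kbH x.
  + move=> f x [hf If].
    by rewrite (kb x).2 // (O_inv f (conj hf If) x).
- rewrite /is_rkhs; split.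
  + split.
      split => //; apply/funext => y; rewrite OH // ip0l' //; exact: (kb y).1.
    split.
    * move=> f g [hf Of] [hg Og]; split; first exact: HD.
      apply/funext => y; rewrite OH; last exact: HD.
      rewrite ipD //; last exact: (kb y).1.
      by rewrite -!OH // (congr1 (@^~ y) Of) (congr1 (@^~ y) Og) /= addr0.
    * move=> a f [hf Of]; split; first exact: HZ.
      apply/funext => y; rewrite OH; last exact: HZ.
      rewrite ipZ //; last exact: (kb y).1.
      by rewrite -OH // (congr1 (@^~ y) Of) /= mulr0.
  + split; first by move=> f g [hf _] [hg _]; exact: ipC.
    split; first by move=> f g h [hf _] [hg _] [hh _]; exact: ipD.
    split; first by move=> a f g [hf _] [hg _]; exact: ipZ.
    split; first by move=> f [hf _]; exact: ip_ge0.
    by move=> f [hf _]; exact: ip_eq0.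
  + move=> u uP cau.
    have [f hf cv] := Hc u (fun n => (uP n).1) cau.
    exists f => //; split => //.
    apply/funext => y; rewrite OH //.
    apply: zero_of_small => del del0.
    have hk := (kb y).1.
    set kby := (fun z => kbar lam act k z y) in hk *.
    have nk0 : 0 < nrm ip kby + 1 by have := nrm_ge0' kby; lra.
    have [N hN] := cv (del / (nrm ip kby + 1)) (divr_gt0 del0 nk0).
    have hN' := hN N (leqnn N).
    have hu := (uP N).1.
    have E : ip f kby = - ip (fun x => u N x - f x) kby.
      rewrite ipB' // -(OH (u N) y hu) (congr1 (@^~ y) (uP N).2) /=.
      by rewrite sub0r opprK.
    rewrite E normrN.
    apply: (le_lt_trans (abs_ip' _ _ (Hsub' _ _ hu hf) hk)).
    apply: (le_lt_trans (y := nrm ip (fun x => u N x - f x) * (nrm ip kby + 1))).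
      by rewrite ler_wpM2l ?nrm_ge0' // lerDl.
    rewrite -ltr_pdivlMr //; apply: (lt_le_trans hN').
    by apply: ler_wpM2r; [rewrite invr_ge0 ltW | rewrite lerDl ltW].
  + move=> x /=.
    have hx : H (fun y => k y x - kbar lam act k y x) := Hsub' _ _ (kH x) (kb x).1.
    split => //.
    apply/funext => z; rewrite OH //.
    rewrite ipB'; try solve [exact: kH | exact: (kb _).1].
    rewrite (ipC _ _ (kH x) (kb z).1) krep; last exact: (kb z).1.
    rewrite -OH; last exact: (kb x).1.
    by rewrite O_inv ?kbH // kbsym subrr.
  + move=> f x [hf Of] /=.
    rewrite ipBr'; try solve [exact: kH | exact: (kb _).1 | done].
    by rewrite krep // -OH // (congr1 (@^~ x) Of) /= subr0.
Qed.
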